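(* Let $G=(V,E,\ell,\Phi)$ be a strongly connected trackable weak model. If $(x_1,\dots,x_t)$ and $(x'_1,\dots,x'_t)$ are walks in $G$ with $x_1=x'_1$, $x_t=x'_t$ and $\ell(x_i)=\ell(x'_i)$ for all $1\le i\le t$, then $x_i=x'_i$ for all $1\le i\le t$. Equivalently, when observations start from a known node, at most one hypothesis (as a walk up to time $t$) visits a given node at a given time $t$.
   Context: A (single-colored) weak model $G=(V,E,\ell,\Phi)$ consists of a finite set of nodes $V$, directed edges $E\subseteq V\times V$, a finite color set $\Phi$ and a coloring $\ell:V\to\Phi$. A walk of length $t$ is a node sequence $(x_1,\dots,x_t)$ with $(x_i,x_{i+1})\in E$. For $Y_{[t]}\in\Phi^t$, a hypothesis is a walk $(x_1,\dots,x_t)$ with $\ell(x_i)=Y_i$ for all $i$; $\mathcal H_G(Y_{[t]})$ is the set of hypotheses and $n_G(t)=\max_{Y_{[t]}}|\mathcal H_G(Y_{[t]})|$. $G$ is trackable if $n_G(t)=O(t^k)$ for some $k\ge0$, and strongly connected if every node is reachable from every node by a directed path. *)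

(* Defs.v *)
(* A weak model G = (V, E, l, Phi) is given by
   V Phi : finType, E : rel V (directed edges), l : V -> Phi. *)
From mathcomp Require Import all_boot.
Set Implicit Arguments. Unset Strict Implicit. Unset Printing Implicit Defensive.

Definition is_walk (V : finType) (E : rel V) (w : seq V) : bool :=
  if w is x :: s then path E x s else true.

Definition hypotheses (V Phi : finType) (E : rel V) (l : V -> Phi)
  (t : nat) (Y : t.-tuple Phi) : {set t.-tuple V} :=
  [set w : t.-tuple V | is_walk E w && (map l w == Y)].

Definition nG (V Phi : finType) (E : rel V) (l : V -> Phi) (t : nat) : nat :=
  \max_(Y : t.-tuple Phi) #|hypotheses E l Y|.

Definition trackable (V Phi : finType) (E : rel V) (l : V -> Phi) : Prop :=
  exists (k c N : nat), forall t, N <= t -> nG E l t <= c * t ^ k.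

Definition strongly_connected (V : finType) (E : rel V) : Prop :=
  forall x y : V, connect E x y.

(* Main.v *)
Require Import Defs.
From mathcomp Require Import all_boot.
From mathcomp Require Import zify.
Set Implicit Arguments. Unset Strict Implicit. Unset Printing Implicit Defensive.

Lemma exp_dom K D : exists a, a*K + D < 2^a.
Proof.
exists ((2*K+D+1) + (2*K+D+1)).
set b := 2*K+D+1.
rewrite expnD.
have hb : b < 2^b := ltn_expl b (isT : 1 < 2).
have : b.+1 * b.+1 <= 2^b * 2^b by apply: leq_mul.
rewrite /b; nia.
Qed.

Lemma poly_exp c n k N : 0 < n ->
  exists j, N <= (j*n).+1 /\ c * (j*n).+1 ^ k < 2^j.
Proof.
move=> n0.
have [a ha] := exp_dom k (c * n ^ k + N).
have p0 : 0 < 2^a by rewrite expn_gt0.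
exists (2^a).-1; split.
  have hn : (2^a).-1 <= (2^a).-1 * n by rewrite leq_pmulr.
  lia.
have h1 : (((2^a).-1)*n).+1 <= 2^a * n.
  rewrite -{2}(prednK p0) mulSn. lia.
have h2 : (((2^a).-1)*n).+1 ^ k <= 2^(a*k) * n^k.
  rewrite expnM -expnMn; case: k {ha} => [|k]; first by rewrite !expn0.
  by rewrite leq_exp2r.
set C := c * n ^ k.
have h3 : c * (((2^a).-1)*n).+1 ^ k <= C * 2^(a*k).
  rewrite /C -mulnA [n^k * _]mulnC; exact: leq_mul.
have h4 : C < 2^C := ltn_expl C (isT : 1 < 2).
have h5 : 2^(C + a*k) <= 2^((2^a).-1) by rewrite leq_exp2l //; lia.
rewrite expnD in h5.
have h6 : C * 2^(a*k) < 2^C * 2^(a*k) by rewrite ltn_pmul2r // expn_gt0.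
lia.
Qed.

Section Blocks.
Variables (V Phi : finType) (E : rel V) (l : V -> Phi) (x : V) (B : bool -> seq V) (n : nat).
Hypothesis hpath : forall b, path E x (B b).
Hypothesis hlast : forall b, last x (B b) = x.
Hypothesis hsize : forall b, size (B b) = n.
Hypothesis hcol : map l (B true) = map l (B false).
Hypothesis hneq : B true != B false.

Definition W (bs : seq bool) := flatten (map B bs).

Lemma W_path bs : path E x (W bs) /\ last x (W bs) = x.
Proof.
elim: bs => [|b bs [IH1 IH2]] //=.
rewrite /W /= cat_path last_cat hlast hpath /=; exact: (conj IH1 IH2).
Qed.

Lemma W_size bs : size (W bs) = size bs * n.
Proof. by elim: bs => [|b bs IH] //=; rewrite /W /= size_cat hsize -/(W bs) IH mulSn. Qed.

Lemma hcolb b : map l (B b) = map l (B true).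
Proof. by case: b. Qed.

Lemma W_col bs : map l (W bs) = map l (W (nseq (size bs) true)).
Proof.
elim: bs => [|b bs IH] //=.
by rewrite /W /= !map_cat hcolb -/(W bs) IH.
Qed.

Lemma W_inj bs bs' : size bs = size bs' -> W bs = W bs' -> bs = bs'.
Proof.
elim: bs bs' => [|b bs IH] [|b' bs'] //= [hs] e.
move/eqP: e; rewrite /W /= eqseq_cat ?hsize // => /andP [e1 e2].
rewrite -/(W bs) -/(W bs') in e2.
rewrite (IH _ hs (eqP e2)); congr (_ :: _).
by move: e1 hneq; case: b; case: b' => //= /eqP ->; rewrite eqxx.
Qed.

Lemma count_lb j : 2 ^ j <= nG E l (j * n).+1.
Proof.
set T := (j * n).+1.
pose f (bs : j.-tuple bool) : T.-tuple V := insubd (nseq_tuple T x) (x :: W bs).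
have fE bs : val (f bs) = x :: W bs.
  by rewrite val_insubd /= W_size size_tuple eqxx.
have finj : injective f.
  move=> a b e; apply: val_inj; apply: W_inj; first by rewrite !size_tuple.
  by move: (congr1 val e); rewrite !fE => -[].
pose Y : T.-tuple Phi := map_tuple l (f (nseq_tuple j true)).
rewrite /nG; apply: (@leq_trans #|hypotheses E l Y|); last first.
  exact: (@leq_bigmax _ (fun Z : T.-tuple Phi => #|hypotheses E l Z|) Y).
have <- : #|[set f bs | bs in {: j.-tuple bool}]| = 2 ^ j.
  by rewrite card_imset // card_tuple card_bool.
apply: subset_leq_card; apply/subsetP => w /imsetP [bs _ ->].
rewrite inE; apply/andP; split.
  by rewrite /is_walk fE; case: (W_path bs).
apply/eqP; rewrite /Y /= !fE /=; congr (_ :: _).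
by rewrite W_col size_tuple.
Qed.
End Blocks.

Theorem corollary2 (V Phi : finType) (E : rel V) (l : V -> Phi)
  (hsc : strongly_connected E) (htr : trackable E l)
  (x : V) (s s' : seq V) :
  path E x s -> path E x s' ->
  size s = size s' ->
  last x s = last x s' ->
  map l (x :: s) = map l (x :: s') ->
  s = s'.
Proof.
move=> ps ps' hs hl [hm].
apply/eqP; apply/negPn/negP => hne.
have [p pp px] := connectP (hsc (last x s) x).
pose B b := (if b then s else s') ++ p.
have hpath b : path E x (B b).
  by case: b; rewrite /B cat_path ?ps ?ps' -?hl pp.
have hlast b : last x (B b) = x.
  by case: b; rewrite /B last_cat -?hl -px.
have hsize b : size (B b) = size s + size p.
  by case: b; rewrite /B size_cat ?hs.
have hcol : map l (B true) = map l (B false) by rewrite /B !map_cat hm.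
have hneq : B true != B false.
  by rewrite /B /= eqseq_cat // eqxx andbT.
have n0 : 0 < size s + size p.
  rewrite addn_gt0 lt0n size_eq0; apply/orP; left.
  apply: contraNN hne => /eqP e0; move: hs; rewrite e0 => /esym/size0nil ->.
  by [].
have [k [c [N hN]]] := htr.
have [j [hj hc]] := poly_exp c k N n0.
have := count_lb hpath hlast hsize hcol hneq j.
have := hN _ hj.
lia.
Qed.
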